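(* Let $b<-1$ and let $\lambda_1>0$ be a constant such that $(\mathcal{L}\eta,\eta)\ge\lambda_1\|\eta\|^2_{H^1_\alpha}$ for all $\eta\in H^1_\alpha$ with $\int\eta Q'\,dx=\int\eta\,SQ\,dx=0$. Then there exists $\theta>0$ such that every $\eta\in H^1_\alpha$ satisfying $$\Big|\Big(\eta,\frac{SQ}{\|SQ\|_{L^2}}\Big)\Big|+\Big|\Big(\eta,\frac{Q'}{\|Q'\|_{L^2}}\Big)\Big|\le\theta\|\eta\|_{H^1_\alpha}$$ obeys $(\mathcal{L}\eta,\eta)\ge\frac{3\lambda_1}{4}\|\eta\|^2_{H^1_\alpha}$.
   Context: Throughout, $b<-1$, $\nu=-\frac{b+1}{2}>0$. Fix $A>0$, $x_*\in\mathbb{R}$; the lefton is $Q(x)=A\frac{1-b}{2}(\cosh\nu(x-x_* ))^{b/\nu}$. Set $k=(A\frac{1-b}{2})^{\frac1b+1}$, $\alpha=Q^{-\frac1b-2}$. $H^1_\alpha$ is $H^1(\mathbb{R})$ with norm $\|f\|^2_{H^1_\alpha}=\int(f^2+f_x^2)\alpha\,dx$. $(f,g)=\int fg\,dx$ is the $L^2$ inner product. $SQ=\frac{2k(1-b)}{b}Q^{-\frac1b}+\frac{2(b-1)}{b}Q$. $(\mathcal{L}\eta,\eta)=\frac{2k}{b^2}\int\eta_x^2\alpha\,dx-\frac{2k(b+1)}{b}\int\eta^2\alpha\,dx$. *)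

(* Defs.v *)
From HB Require Import structures.
From mathcomp Require Import all_boot all_order all_algebra.
From mathcomp Require Import all_classical all_reals all_analysis.
Set Implicit Arguments. Unset Strict Implicit. Unset Printing Implicit Defensive.
Import Order.TTheory GRing.Theory Num.Theory.
Import numFieldNormedType.Exports.
Local Open Scope classical_set_scope.
Local Open Scope ring_scope.

Section Defs.
Variable R : realType.


Definition coshR (x : R) : R := (expR x + expR (- x)) / 2.

Definition nu (b : R) : R := - (b + 1) / 2.

Definition Q (b A xs : R) (x : R) : R :=
  A * (1 - b) / 2 * powR (coshR (nu b * (x - xs))) (b / nu b).

Definition dQ (b A xs : R) : R -> R := derive1 (Q b A xs).

Definition kk (b A : R) : R := powR (A * (1 - b) / 2) (b^-1 + 1).

Definition alpha (b A xs : R) (x : R) : R :=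
  powR (Q b A xs x) (- b^-1 - 2).

Definition SQ (b A xs : R) (x : R) : R :=
  2 * kk b A * (1 - b) / b * powR (Q b A xs x) (- b^-1)
  + 2 * (b - 1) / b * Q b A xs x.

Definition ip (f g : R -> R) : R := \int[@lebesgue_measure R]_x (f x * g x).

Definition L2norm (f : R -> R) : R := Num.sqrt (\int[@lebesgue_measure R]_x (f x ^+ 2)).

(* eta belongs to H^1_alpha, with (weak) derivative g:
   eta, g in L^2, g locally integrable and eta(y) - eta(x) = int_x^y g
   (absolutely continuous representative), and the weighted norm is finite. *)
Definition H1alpha (b A xs : R) (eta g : R -> R) : Prop :=
  [/\ measurable_fun setT eta /\ measurable_fun setT g,
      (@lebesgue_measure R).-integrable setT (EFin \o (fun x => eta x ^+ 2)),
      (@lebesgue_measure R).-integrable setT (EFin \o (fun x => g x ^+ 2)) /\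
      (forall x y : R, x <= y ->
         (@lebesgue_measure R).-integrable `[x, y] (EFin \o g) /\
         eta y - eta x = \int[@lebesgue_measure R]_(t in `[x, y]) g t),
      (@lebesgue_measure R).-integrable setT (EFin \o (fun x => eta x ^+ 2 * alpha b A xs x))
    & (@lebesgue_measure R).-integrable setT (EFin \o (fun x => g x ^+ 2 * alpha b A xs x))].

Definition H1a_sqnorm (b A xs : R) (eta g : R -> R) : R :=
  \int[@lebesgue_measure R]_x ((eta x ^+ 2 + g x ^+ 2) * alpha b A xs x).

Definition H1a_norm (b A xs : R) (eta g : R -> R) : R :=
  Num.sqrt (H1a_sqnorm b A xs eta g).

Definition Lform (b A xs : R) (eta g : R -> R) : R :=
  2 * kk b A / b ^+ 2 * \int[@lebesgue_measure R]_x (g x ^+ 2 * alpha b A xs x)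
  - 2 * kk b A * (b + 1) / b * \int[@lebesgue_measure R]_x (eta x ^+ 2 * alpha b A xs x).

End Defs.

(* Main.v *)
Require Import Defs.
From HB Require Import structures.
From mathcomp Require Import all_boot all_order all_algebra.
From mathcomp Require Import all_classical all_reals all_analysis.
From mathcomp Require Import measurable_realfun exponential_distribution ring lra.
Set Implicit Arguments. Unset Strict Implicit. Unset Printing Implicit Defensive.
Import Order.TTheory GRing.Theory Num.Theory.
Import numFieldNormedType.Exports.
Local Open Scope classical_set_scope.
Local Open Scope ring_scope.

Lemma integrable_expNabs (R : realType) :
  (@lebesgue_measure R).-integrable setT (EFin \o (fun x : R => expR (- `|x|))).
Proof.
have cf : continuous (fun x : R => expR (- `|x|)).
  move=> x; apply: continuous_comp; last exact: continuous_expR.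
  apply: (@continuousN _ R^o); exact: norm_continuous.
have mf : measurable_fun setT (fun x : R => expR (- `|x|)).
  exact: continuous_measurable_fun.
apply/integrableP; split; first exact/measurable_EFinP.
under eq_integral do rewrite /= ger0_norm ?expR_ge0//.
rewrite ge0_symfun_integralT; last 3 first.
- by move=> x; exact: expR_ge0.
- exact: cf.
- by move=> x /=; rewrite normrN.
have -> : (\int[lebesgue_measure]_(x in [set x : R | (0 <= x)%R]) (expR (- `|x|))%:E
   = \int[lebesgue_measure]_(x in [set x : R | (0 <= x)%R]) (exponential_pdf 1 x)%:E)%E.
  apply: eq_integral => x; rewrite inE /= => x0.
  by rewrite exponential_pdfE// mul1r mulN1r ger0_norm.
apply: lte_mul_pinfty => //.
apply: (@le_lt_trans _ _ 1%E); last exact: ltry.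
rewrite -(@integral_exponential_pdf R 1 ltr01).
apply: ge0_subset_integral => //.
- by rewrite -set_itvcy.
- by apply/measurable_EFinP; exact: measurable_exponential_pdf.
- by move=> x _; rewrite lee_fin exponential_pdf_ge0.
Qed.

Definition sinhR (R : realType) (x : R) : R := (expR x - expR (- x)) / 2.

Lemma coshR_gt0 (R : realType) (x : R) : 0 < coshR x.
Proof. by rewrite /coshR divr_gt0 // addr_gt0 // expR_gt0. Qed.

Lemma coshR_ge_expabs (R : realType) (x : R) : expR `|x| / 2 <= coshR x.
Proof.
rewrite /coshR.
have h1 := expR_ge0 x; have h2 := expR_ge0 (- x).
have [x0|x0] := leP 0 x.
  rewrite ger0_norm //; lra.
rewrite ltr0_norm //; lra.
Qed.

Lemma abs_sinh_le_cosh (R : realType) (x : R) : `|sinhR x| <= coshR x.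
Proof.
rewrite /sinhR /coshR.
have h1 := expR_ge0 x; have h2 := expR_ge0 (- x).
rewrite ler_norml; apply/andP; split; lra.
Qed.

Lemma is_derive_coshR (R : realType) (x : R) : is_derive x 1 (@coshR R) (sinhR x).
Proof.
have h1 : is_derive x 1 (expR \o (fun y : R => - y)) (expR (- x) * (-1)).
  apply: is_derive1_comp.
have h2 : is_derive x 1 (fun y : R => expR y + (expR \o (fun y : R => - y)) y)
   (expR x + expR (- x) * (-1)).
  exact: is_deriveD.
have h3 := @is_deriveZ R R R _ (2^-1) x 1 _ h2.
have -> : @coshR R = (2^-1 *: (fun y : R => expR y + (expR \o (fun y : R => - y)) y)).
  by apply/funext => y; rewrite /coshR /= mulrC.
rewrite (_ : sinhR x = 2^-1 *: (expR x + expR (- x) * (-1))) //.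
by rewrite /sinhR mulrN1 mulrC.
Qed.

Definition dQf (R : realType) (b A xs : R) (x : R) : R :=
  A * (1 - b) / 2 * ((b / nu b) * powR (coshR (nu b * (x - xs))) (b / nu b - 1)
     * (sinhR (nu b * (x - xs)) * nu b)).

Lemma Q_is_derive (R : realType) (b A xs x : R) :
  is_derive x 1 (Q b A xs) (dQf b A xs x).
Proof.
set g := fun x : R => nu b * (x - xs).
have hg : is_derive x 1 g (nu b).
  have h0 : is_derive x 1 (fun x : R => x - xs) (1 - 0).
    exact: is_deriveB.
  have := @is_deriveZ R R R _ (nu b) x 1 _ h0.
  rewrite subr0 /= => H.
  have e1 : g = (nu b \*: +%R^~ (- xs)) by apply/funext => y.
  rewrite e1; have e2 : (nu b)%:A = nu b :> R.
    first [ exact: mulr1 | exact: scaler1 | (rewrite scaler1 //) | (rewrite mulr_algl mulr1 //) | idtac "none" ].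
  by rewrite e2 in H.
have hc : is_derive x 1 (@coshR R \o g) (sinhR (g x) * nu b).
  apply: is_derive1_comp; exact: is_derive_coshR.
have hp : is_derive x 1 (((@powR R) ^~ (b / nu b)) \o (@coshR R \o g))
   ((b / nu b) * powR (coshR (g x)) (b / nu b - 1) * (sinhR (g x) * nu b)).
  apply: is_derive1_comp => //.
  exact: is_derive1_powR (coshR_gt0 _).
have := @is_deriveZ R R R _ (A * (1 - b) / 2) x 1 _ hp.
have -> // : (A * (1 - b) / 2) \*: (((@powR R) ^~ (b / nu b)) \o (@coshR R \o g)) = Q b A xs.
by apply/funext => y.
Qed.

Lemma dQE (R : realType) (b A xs : R) : dQ b A xs = dQf b A xs.
Proof.
apply/funext => x; rewrite /dQ derive1E.
have := Q_is_derive b A xs x; move=> [_ h]; exact: h.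
Qed.

Lemma nu_gt0 (R : realType) (b : R) : b < -1 -> 0 < nu b.
Proof. move=> hb; rewrite /nu; lra. Qed.

Lemma K0_gt0 (R : realType) (b A : R) : b < -1 -> 0 < A -> 0 < A * (1 - b) / 2.
Proof. move=> hb hA; have h : 0 < 1 - b by lra. by rewrite !mulr_gt0 // invr_gt0. Qed.

Lemma Q_gt0 (R : realType) (b A xs x : R) : b < -1 -> 0 < A -> 0 < Q b A xs x.
Proof.
move=> hb hA; rewrite /Q; apply: mulr_gt0; first exact: K0_gt0.
exact/powR_gt0/coshR_gt0.
Qed.

Lemma lnQ_le (R : realType) (b A xs x : R) : b < -1 -> 0 < A ->
  ln (Q b A xs x) <= (ln (A * (1 - b) / 2) - b / nu b * ln 2) + b * `|x - xs|.
Proof.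
move=> hb hA; have nu0 := nu_gt0 hb; have K0 := K0_gt0 hb hA.
rewrite /Q lnM ?posrE ?powR_gt0 ?coshR_gt0 // ln_powR.
set y := nu b * (x - xs).
have hc : ln (expR `|y| / 2) <= ln (coshR y).
  by rewrite ler_ln ?posrE ?coshR_gt0 ?coshR_ge_expabs ?divr_gt0 ?expR_gt0.
rewrite ln_div ?posrE ?expR_gt0 // expRK in hc.
have hy : `|y| = nu b * `|x - xs| by rewrite /y normrM gtr0_norm.
rewrite hy in hc.
have he : b / nu b < 0 by rewrite pmulr_llt0 ?invr_gt0 //; lra.
have : b / nu b * ln (coshR y) <= b / nu b * (nu b * `|x - xs| - ln 2).
  by rewrite ler_nM2l.
have -> : b / nu b * (nu b * `|x - xs| - ln 2) = b * `|x - xs| - b / nu b * ln 2.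
  by field; rewrite gt_eqF.
lra.
Qed.

Lemma powRQ_le (R : realType) (b A xs p x : R) : b < -1 -> 0 < A -> 0 < p -> p * b <= -1 ->
  powR (Q b A xs x) p <=
  expR (p * (ln (A * (1 - b) / 2) - b / nu b * ln 2) + `|xs|) * expR (- `|x|).
Proof.
move=> hb hA hp hpb; rewrite -expRD /powR gt_eqF ?Q_gt0 // ler_expR.
set c0 := (ln (A * (1 - b) / 2) - b / nu b * ln 2).
have h1 := lnQ_le xs x hb hA.
have h2 : p * ln (Q b A xs x) <= p * (c0 + b * `|x - xs|) by rewrite ler_pM2l.
have h3 : `|x| <= `|x - xs| + `|xs|.
  by rewrite -{1}(subrK xs x) ler_normD.
have h4 : p * (b * `|x - xs|) <= - `|x - xs|.
  rewrite mulrA; have := normr_ge0 (x - xs); nra.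
rewrite mulrC; lra.
Qed.

Lemma powR_sqr (R : realType) (a r : R) : 0 < a -> powR a r ^+ 2 = powR a (r * 2).
Proof.
move=> a0; rewrite /powR gt_eqF // -expRM_natr; congr expR.
by rewrite mulrAC.
Qed.

Lemma SQ_sq_le (R : realType) (b A xs : R) : b < -1 -> 0 < A ->
  exists C : R, forall x, SQ b A xs x ^+ 2 <= C * expR (- `|x|).
Proof.
move=> hb hA.
set c3 := 2 * kk b A * (1 - b) / b; set c4 := 2 * (b - 1) / b.
set C1 := expR ((- b^-1 * 2) * (ln (A * (1 - b) / 2) - b / nu b * ln 2) + `|xs|).
set C2 := expR (2 * (ln (A * (1 - b) / 2) - b / nu b * ln 2) + `|xs|).
exists (2 * c3 ^+ 2 * C1 + 2 * c4 ^+ 2 * C2) => x.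
have b0 : b != 0 by apply/negP => /eqP b0; rewrite b0 in hb; lra.
have hQ := Q_gt0 xs x hb hA.
have h1 : powR (Q b A xs x) (- b^-1) ^+ 2 <= C1 * expR (- `|x|).
  rewrite powR_sqr //; apply: powRQ_le => //.
      have : b^-1 < 0 by rewrite invr_lt0; lra.
    lra.
  rewrite mulrAC mulNr mulVf // mulN1r; lra.
have h2 : Q b A xs x ^+ 2 <= C2 * expR (- `|x|).
  rewrite -[Q b A xs x]powRr1; last exact: ltW.
  rewrite powR_sqr // mul1r.
  apply: powRQ_le => //; lra.
rewrite /SQ -/c3 -/c4.
set P := powR (Q b A xs x) (- b^-1).
set q := Q b A xs x.
have e1 : (c3 * P + c4 * q) ^+ 2 <= 2 * c3 ^+ 2 * P ^+ 2 + 2 * c4 ^+ 2 * q ^+ 2.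
  rewrite -subr_ge0.
  have -> : 2 * c3 ^+ 2 * P ^+ 2 + 2 * c4 ^+ 2 * q ^+ 2 - (c3 * P + c4 * q) ^+ 2
    = (c3 * P - c4 * q) ^+ 2 by ring.
  exact: sqr_ge0.
apply: (le_trans e1).
have -> : (2 * c3 ^+ 2 * C1 + 2 * c4 ^+ 2 * C2) * expR (- `|x|)
  = 2 * c3 ^+ 2 * (C1 * expR (- `|x|)) + 2 * c4 ^+ 2 * (C2 * expR (- `|x|)) by ring.
apply: lerD; apply: ler_wpM2l => //; by rewrite mulr_ge0 // sqr_ge0.
Qed.

Lemma dQ_abs_le (R : realType) (b A xs x : R) : b < -1 -> 0 < A ->
  `|dQ b A xs x| <= - b * Q b A xs x.
Proof.
move=> hb hA; rewrite dQE /dQf /Q.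
have nu0 := nu_gt0 hb; have K0 := K0_gt0 hb hA.
set K := A * (1 - b) / 2; set e := b / nu b; set y := nu b * (x - xs).
have hc := coshR_gt0 y.
have hs := abs_sinh_le_cosh y.
have hp : powR (coshR y) (e - 1) * coshR y = powR (coshR y) e.
  rewrite -{2}[coshR y]powRr1 ?ltW // -powRD ?subrK //.
  by apply/implyP => _; rewrite gt_eqF.
have he : e * nu b = b.
  by rewrite /e -mulrA mulVf ?gt_eqF // mulr1.
have hP := powR_ge0 (coshR y) (e - 1).
set P := powR (coshR y) (e - 1).
set m := K * e * P * nu b.
have hm : m <= 0.
  rewrite /m (_ : K * e * P * nu b = K * P * (e * nu b)); last by ring.
  rewrite he; apply: mulr_ge0_le0; last lra.
  rewrite mulr_ge0 //; exact: ltW.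
rewrite (_ : K * (e * P * (sinhR y * nu b)) = m * sinhR y); last by rewrite /m; ring.
rewrite -hp (_ : - b * (K * (P * coshR y)) = - m * coshR y); last first.
  by rewrite /m -{1}he; ring.
rewrite normrM ler0_norm //.
by apply: ler_wpM2l => //; lra.
Qed.
Lemma meas_coshR_aff (R : realType) (c xs : R) :
  measurable_fun setT (fun x : R => coshR (c * (x - xs))).
Proof.
rewrite /coshR.
apply: measurable_funM => //.
apply: measurable_funD.
  apply: measurableT_comp; first exact: measurable_expR.
  apply: measurable_funM => //; apply: measurable_funD => //.
apply: measurableT_comp; first exact: measurable_expR.
apply: measurable_funN.
apply: measurable_funM => //; apply: measurable_funD => //.
Qed.

Lemma meas_Q (R : realType) (b A xs : R) : measurable_fun setT (Q b A xs).
Proof.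
have -> : Q b A xs = (fun x => A * (1 - b) / 2 * powR (coshR (nu b * (x - xs))) (b / nu b)) by [].
apply: measurable_funM => //.
exact: (measurableT_comp (measurable_powR (b / nu b)) (meas_coshR_aff (nu b) xs)).
Qed.

Lemma meas_alpha (R : realType) (b A xs : R) : measurable_fun setT (alpha b A xs).
Proof.
exact: (measurableT_comp (measurable_powR _) (meas_Q b A xs)).
Qed.

Lemma meas_SQ (R : realType) (b A xs : R) : measurable_fun setT (SQ b A xs).
Proof.
rewrite /SQ; apply: measurable_funD; apply: measurable_funM => //.
  exact: (measurableT_comp (measurable_powR _) (meas_Q b A xs)).
exact: meas_Q.
Qed.

Lemma meas_dQ (R : realType) (b A xs : R) : measurable_fun setT (dQ b A xs).
Proof.
rewrite dQE /dQf; apply: measurable_funM => //.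
apply: measurable_funM.
  apply: measurable_funM => //.
  exact: (measurableT_comp (measurable_powR _) (meas_coshR_aff (nu b) xs)).
apply: measurable_funM => //.
rewrite /sinhR; apply: measurable_funM => //.
apply: measurable_funB.
  apply: measurableT_comp; first exact: measurable_expR.
  apply: measurable_funM => //; apply: measurable_funD => //.
apply: measurableT_comp; first exact: measurable_expR.
apply: measurable_funN.
apply: measurable_funM => //; apply: measurable_funD => //.
Qed.

Lemma int_dom (R : realType) (f g : R -> R) :
  measurable_fun setT f -> (forall x, `|f x| <= g x) ->
  (@lebesgue_measure R).-integrable setT (EFin \o g) ->
  (@lebesgue_measure R).-integrable setT (EFin \o f).
Proof.
move=> mf fg ig; apply: le_integrable ig => //.
  exact/measurable_EFinP.
move=> x _ /=; rewrite lee_fin.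
apply: (le_trans (fg x)); exact: ler_norm.
Qed.

Lemma intZ (R : realType) (k : R) (f : R -> R) :
  (@lebesgue_measure R).-integrable setT (EFin \o f) ->
  (@lebesgue_measure R).-integrable setT (EFin \o (fun x => k * f x)).
Proof.
move=> hf; have := integrableZl measurableT k hf.
by apply: eq_integrable => // x _ /=; rewrite EFinM.
Qed.

Lemma intD (R : realType) (f g : R -> R) :
  (@lebesgue_measure R).-integrable setT (EFin \o f) ->
  (@lebesgue_measure R).-integrable setT (EFin \o g) ->
  (@lebesgue_measure R).-integrable setT (EFin \o (fun x => f x + g x)).
Proof.
move=> hf hg; have := integrableD measurableT hf hg.
by apply: eq_integrable => // x _ /=; rewrite EFinD.
Qed.

Lemma int_SQ2 (R : realType) (b A xs : R) : b < -1 -> 0 < A ->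
  (@lebesgue_measure R).-integrable setT (EFin \o (fun x => SQ b A xs x ^+ 2)).
Proof.
move=> hb hA; have [C hC] := SQ_sq_le xs hb hA.
apply: (@int_dom _ _ (fun x => C * expR (- `|x|))).
- by apply: measurable_funX; exact: meas_SQ.
- by move=> x; rewrite ger0_norm ?sqr_ge0 // hC.
- by apply: intZ; exact: integrable_expNabs.
Qed.

Lemma Q_sq_le (R : realType) (b A xs : R) : b < -1 -> 0 < A ->
  exists C : R, forall x, Q b A xs x ^+ 2 <= C * expR (- `|x|).
Proof.
move=> hb hA.
exists (expR (2 * (ln (A * (1 - b) / 2) - b / nu b * ln 2) + `|xs|)) => x.
have hQ := Q_gt0 xs x hb hA.
rewrite -[Q b A xs x]powRr1; last exact: ltW.
rewrite powR_sqr // mul1r.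
apply: powRQ_le => //; lra.
Qed.

Lemma int_dQ2 (R : realType) (b A xs : R) : b < -1 -> 0 < A ->
  (@lebesgue_measure R).-integrable setT (EFin \o (fun x => dQ b A xs x ^+ 2)).
Proof.
move=> hb hA; have [C hC] := Q_sq_le xs hb hA.
apply: (@int_dom _ _ (fun x => b ^+ 2 * (C * expR (- `|x|)))).
- by apply: measurable_funX; exact: meas_dQ.
- move=> x; rewrite ger0_norm ?sqr_ge0 //.
  have h1 := dQ_abs_le xs x hb hA.
  have h0 := normr_ge0 (dQ b A xs x).
  have hQ := Q_gt0 xs x hb hA.
  apply: (@le_trans _ _ ((- b * Q b A xs x) ^+ 2)).
    rewrite -real_normK ?num_real //.
    by apply: lerXn2r => //; rewrite ?nnegrE // mulr_ge0 //; lra.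
  rewrite exprMn sqrrN; apply: ler_wpM2l; first exact: sqr_ge0.
  exact: hC.
- by apply: intZ; apply: intZ; exact: integrable_expNabs.
Qed.

Lemma intDZ (R : realType) (D : set (measurableTypeR R)) (p c : R) (f g : R -> R) : measurable D ->
  (@lebesgue_measure R).-integrable D (EFin \o f) ->
  (@lebesgue_measure R).-integrable D (EFin \o g) ->
  (@lebesgue_measure R).-integrable D (EFin \o (fun x => p * f x + c * g x)).
Proof.
move=> mD hf hg.
have hf' := integrableZl mD p hf; have hg' := integrableZl mD c hg.
have := integrableD mD hf' hg'.
by apply: eq_integrable => // x _ /=; rewrite EFinD !EFinM.
Qed.

Lemma RintDZ (R : realType) (D : set (measurableTypeR R)) (p c : R) (f g : R -> R) : measurable D ->
  (@lebesgue_measure R).-integrable D (EFin \o f) ->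
  (@lebesgue_measure R).-integrable D (EFin \o g) ->
  \int[@lebesgue_measure R]_(x in D) (p * f x + c * g x) =
  p * \int[@lebesgue_measure R]_(x in D) f x + c * \int[@lebesgue_measure R]_(x in D) g x.
Proof.
move=> mD hf hg.
rewrite RintegralD //; last 2 first.
- have := integrableZl mD p hf.
  by apply: eq_integrable => // x _ /=; rewrite EFinM.
- have := integrableZl mD c hg.
  by apply: eq_integrable => // x _ /=; rewrite EFinM.
by rewrite !RintegralZl.
Qed.

Lemma sq_comb (R : realType) (p c a b : R) :
  (p * a + c * b) ^+ 2 <= 2 * p ^+ 2 * a ^+ 2 + 2 * c ^+ 2 * b ^+ 2.
Proof.
rewrite -subr_ge0.
have -> : 2 * p ^+ 2 * a ^+ 2 + 2 * c ^+ 2 * b ^+ 2 - (p * a + c * b) ^+ 2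
    = (p * a - c * b) ^+ 2 by ring.
exact: sqr_ge0.
Qed.

Lemma alpha_ge0 (R : realType) (b A xs x : R) : 0 <= alpha b A xs x.
Proof. exact: powR_ge0. Qed.

Lemma int_sq_comb (R : realType) (w : R -> R) (p c : R) (f g : R -> R) :
  measurable_fun setT w -> (forall x, 0 <= w x) ->
  measurable_fun setT f -> measurable_fun setT g ->
  (@lebesgue_measure R).-integrable setT (EFin \o (fun x => f x ^+ 2 * w x)) ->
  (@lebesgue_measure R).-integrable setT (EFin \o (fun x => g x ^+ 2 * w x)) ->
  (@lebesgue_measure R).-integrable setT (EFin \o (fun x => (p * f x + c * g x) ^+ 2 * w x)).
Proof.
move=> mw w0 mf mg hf hg.
apply: (@int_dom _ _ (fun x => (2 * p ^+ 2) * (f x ^+ 2 * w x) + (2 * c ^+ 2) * (g x ^+ 2 * w x))).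
- apply: measurable_funM => //; apply: measurable_funX.
  by apply: measurable_funD; apply: measurable_funM.
- move=> x; rewrite ger0_norm; last by rewrite mulr_ge0 ?sqr_ge0.
  have h1 := sq_comb p c (f x) (g x).
  rewrite (_ : 2 * p ^+ 2 * (f x ^+ 2 * w x) + 2 * c ^+ 2 * (g x ^+ 2 * w x)
     = (2 * p ^+ 2 * f x ^+ 2 + 2 * c ^+ 2 * g x ^+ 2) * w x); last by ring.
  by apply: ler_wpM2r.
- by apply: intDZ.
Qed.

Lemma H1_lin (R : realType) (b A xs p c : R) (e1 g1 e2 g2 : R -> R) :
  H1alpha b A xs e1 g1 -> H1alpha b A xs e2 g2 ->
  H1alpha b A xs (fun x => p * e1 x + c * e2 x) (fun x => p * g1 x + c * g2 x).
Proof.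
move=> [[me1 mg1] ie1 [ig1 iv1] iwe1 iwg1] [[me2 mg2] ie2 [ig2 iv2] iwe2 iwg2].
have m1 : measurable_fun [set: R] (fun=> 1 : R) by exact: measurable_cst.
split.
- by split; apply: measurable_funD; apply: measurable_funM.
- have := @int_sq_comb R (fun=> 1) p c e1 e2 m1 (fun=> ler01) me1 me2.
  have e : forall h : R -> R, (fun x => h x ^+ 2 * 1) = (fun x => h x ^+ 2).
    by move=> h; apply/funext => x; rewrite mulr1.
  rewrite !e; exact.
- split.
  + have := @int_sq_comb R (fun=> 1) p c g1 g2 m1 (fun=> ler01) mg1 mg2.
    have e : forall h : R -> R, (fun x => h x ^+ 2 * 1) = (fun x => h x ^+ 2).
      by move=> h; apply/funext => x; rewrite mulr1.
    rewrite !e; exact.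
  + move=> x y xy; have [i1 v1] := iv1 x y xy; have [i2 v2] := iv2 x y xy.
    split; first exact: intDZ.
    rewrite RintDZ // -v1 -v2; ring.
- apply: int_sq_comb => //; [exact: meas_alpha | exact: alpha_ge0].
- apply: int_sq_comb => //; [exact: meas_alpha | exact: alpha_ge0].
Qed.

Notation mu := (@lebesgue_measure _).
Notation Int f := (mu.-integrable setT (EFin \o f)).

Lemma intDZT (R : realType) (p c : R) (f g : R -> R) :
  Int f -> Int g -> Int (fun x => p * f x + c * g x).
Proof. by move=> hf hg; apply: intDZ. Qed.

Lemma RintDZT (R : realType) (p c : R) (f g : R -> R) :
  Int f -> Int g ->
  \int[mu]_x (p * f x + c * g x) = p * \int[mu]_x f x + c * \int[mu]_x g x.
Proof. by move=> hf hg; apply: RintDZ. Qed.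

Lemma int_comb6_ge0 (R : realType) (f1 f2 f3 f4 f5 f6 : R -> R) (k1 k2 k3 k4 k5 k6 : R) :
  Int f1 -> Int f2 -> Int f3 -> Int f4 -> Int f5 -> Int f6 ->
  (forall x, 0 <= k1 * f1 x + k2 * f2 x + k3 * f3 x + k4 * f4 x + k5 * f5 x + k6 * f6 x) ->
  0 <= k1 * \int[mu]_x f1 x + k2 * \int[mu]_x f2 x + k3 * \int[mu]_x f3 x
     + k4 * \int[mu]_x f4 x + k5 * \int[mu]_x f5 x + k6 * \int[mu]_x f6 x.
Proof.
move=> i1 i2 i3 i4 i5 i6 hpos.
have j5 := intDZT k5 k6 i5 i6.
have j4 := intDZT k4 1 i4 j5.
have j3 := intDZT k3 1 i3 j4.
have j2 := intDZT k2 1 i2 j3.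
have := @Rintegral_ge0 _ _ R mu setT
  (fun x => k1 * f1 x + 1 * (k2 * f2 x + 1 * (k3 * f3 x + 1 * (k4 * f4 x + 1 * (k5 * f5 x + k6 * f6 x))))).
rewrite RintDZT // RintDZT // RintDZT // RintDZT // RintDZT // !mul1r !addrA.
apply => x _; have := hpos x; rewrite !mul1r !addrA; exact.
Qed.

Lemma abs_mul_le (R : realType) (t a c : R) : 0 < t ->
  `|a * c| <= t / 2 * a ^+ 2 + 1 / (2 * t) * c ^+ 2.
Proof.
move=> t0; rewrite normrM.
have h : 0 <= (t * `|a| - `|c|) ^+ 2 by exact: sqr_ge0.
have e1 : a ^+ 2 = `|a| ^+ 2 by rewrite real_normK ?num_real.
have e2 : c ^+ 2 = `|c| ^+ 2 by rewrite real_normK ?num_real.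
rewrite e1 e2.
rewrite -subr_ge0.
have -> : t / 2 * `|a| ^+ 2 + 1 / (2 * t) * `|c| ^+ 2 - `|a| * `|c|
   = (t * `|a| - `|c|) ^+ 2 / (2 * t).
  by field; rewrite gt_eqF.
by rewrite divr_ge0 // mulr_ge0 // ltW.
Qed.

Lemma prod_int (R : realType) (e f : R -> R) :
  measurable_fun setT e -> Int (fun x => e x ^+ 2) ->
  measurable_fun setT f -> Int (fun x => f x ^+ 2) ->
  Int (fun x => e x * f x).
Proof.
move=> me ie mf iF.
apply: (@int_dom _ _ (fun x => (1 / 2) * e x ^+ 2 + (1 / (2 * 1)) * f x ^+ 2)).
- exact: measurable_funM.
- move=> x; have := @abs_mul_le R 1 (e x) (f x) ltr01; by rewrite mul1r.
- exact: intDZT.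
Qed.

Lemma ip_lin (R : realType) (p c : R) (e1 e2 f : R -> R) :
  Int (fun x => e1 x * f x) -> Int (fun x => e2 x * f x) ->
  ip (fun x => p * e1 x + c * e2 x) f = p * ip e1 f + c * ip e2 f.
Proof.
move=> h1 h2; rewrite /ip -RintDZT //.
by apply: eq_Rintegral => x _; ring.
Qed.

Lemma ip_div (R : realType) (e f : R -> R) (n : R) :
  Int (fun x => e x * f x) -> ip e (fun x => f x / n) = ip e f / n.
Proof.
move=> h; rewrite /ip -RintegralZr //.
by apply: eq_Rintegral => x _; rewrite mulrA.
Qed.

Lemma sqnormE (R : realType) (b A xs : R) (e g : R -> R) :
  H1alpha b A xs e g ->
  H1a_sqnorm b A xs e g = \int[mu]_x (e x ^+ 2 * alpha b A xs x)
                          + \int[mu]_x (g x ^+ 2 * alpha b A xs x).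
Proof.
move=> [_ _ _ i1 i2]; rewrite /H1a_sqnorm.
rewrite -[X in X + _]mul1r -[X in _ + X]mul1r -RintDZT //.
by apply: eq_Rintegral => x _; ring.
Qed.

Lemma ip_zero (R : realType) (e f : R -> R) :
  measurable_fun setT e -> Int (fun x => e x ^+ 2) ->
  measurable_fun setT f -> Int (fun x => f x ^+ 2) ->
  L2norm f = 0 -> ip e f = 0.
Proof.
move=> me ie mf iF hn.
have hf0 : \int[mu]_x (f x ^+ 2) = 0.
  move: hn; rewrite /L2norm => /eqP; rewrite sqrtr_eq0 => h.
  apply/eqP; rewrite eq_le h /=; apply: Rintegral_ge0 => x _; exact: sqr_ge0.
have iP := prod_int me ie mf iF.
set P0 := \int[mu]_x (e x ^+ 2).
have P00 : 0 <= P0 by apply: Rintegral_ge0 => x _; exact: sqr_ge0.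
have key : forall t, 0 < t -> `|ip e f| <= t / 2 * P0.
  move=> t t0.
  have iA : Int (fun x => `|e x * f x|).
    apply: (@int_dom _ _ (fun x => (t / 2) * e x ^+ 2 + (1 / (2 * t)) * f x ^+ 2)).
    - apply: measurableT_comp => //; exact: measurable_funM.
    - by move=> x; rewrite normr_id; apply: abs_mul_le.
    - exact: intDZT.
  apply: (le_trans (le_normr_Rintegral _ _)) => //.
  apply: (@le_trans _ _ (\int[mu]_x ((t / 2) * e x ^+ 2 + (1 / (2 * t)) * f x ^+ 2))).
    apply: le_Rintegral => //; first exact: intDZT.
    by move=> x _; apply: abs_mul_le.
  by rewrite RintDZT // hf0 mulr0 addr0.
apply/eqP; apply/negPn/negP => hne.
have hpos : 0 < `|ip e f| by rewrite normr_gt0.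
have := key (`|ip e f| / (P0 + 1)) (divr_gt0 hpos (ltr_wpDl P00 ltr01)).
rewrite -subr_ge0.
have -> : `|ip e f| / (P0 + 1) / 2 * P0 - `|ip e f|
   = - (`|ip e f| * (P0 + 2) / (2 * (P0 + 1))).
  by field; apply/negP => /eqP h; lra.
rewrite oppr_ge0 => h; have : 0 < `|ip e f| * (P0 + 2) / (2 * (P0 + 1)).
  apply: divr_gt0; first by apply: mulr_gt0 => //; lra.
  lra.
lra.
Qed.

Lemma lagrange1 (R : realType) (p q r s : R) : (p * q - r * s) ^+ 2 <= (p ^+ 2 + r ^+ 2) * (q ^+ 2 + s ^+ 2).
Proof.
rewrite -subr_ge0.
have -> : (p ^+ 2 + r ^+ 2) * (q ^+ 2 + s ^+ 2) - (p * q - r * s) ^+ 2 = (p * s + r * q) ^+ 2 by ring.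
exact: sqr_ge0.
Qed.

Lemma lagrange2 (R : realType) (p q r s : R) : (p * q + r * s) ^+ 2 <= (p ^+ 2 + r ^+ 2) * (q ^+ 2 + s ^+ 2).
Proof.
rewrite -subr_ge0.
have -> : (p ^+ 2 + r ^+ 2) * (q ^+ 2 + s ^+ 2) - (p * q + r * s) ^+ 2 = (p * s - r * q) ^+ 2 by ring.
exact: sqr_ge0.
Qed.

Lemma lin_choice (R : realType) (X : Type) (H : X -> Prop) (l1 l2 : X -> R) (x0 : X) : H x0 ->
  exists x1 x2 (K : R), [/\ H x1, H x2, 0 <= K &
    forall y, H y -> exists a c : R,
      [/\ l1 y = a * l1 x1 + c * l1 x2, l2 y = a * l2 x1 + c * l2 x2 &
          a ^+ 2 + c ^+ 2 <= K * (l1 y ^+ 2 + l2 y ^+ 2)]].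
Proof.
move=> Hx0.
have [[x1 [x2 [H1 [H2 hd]]]] | nd] :=
  pselect (exists x1 x2, H x1 /\ H x2 /\ l1 x1 * l2 x2 - l2 x1 * l1 x2 != 0).
  set d := l1 x1 * l2 x2 - l2 x1 * l1 x2.
  set K := (l1 x1 ^+ 2 + l2 x1 ^+ 2 + l1 x2 ^+ 2 + l2 x2 ^+ 2) / d ^+ 2.
  have d2 : 0 < d ^+ 2 by rewrite exprn_even_gt0.
  exists x1, x2, K; split => //.
    apply: divr_ge0; last exact: ltW.
    have := sqr_ge0 (l1 x1); have := sqr_ge0 (l2 x1); have := sqr_ge0 (l1 x2); have := sqr_ge0 (l2 x2).
    lra.
  move=> y Hy.
  set n1 := l1 y * l2 x2 - l2 y * l1 x2.
  set n2 := l1 x1 * l2 y - l2 x1 * l1 y.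
  exists (n1 / d), (n2 / d); split.
  - by rewrite /n1 /n2 /d; field.
  - by rewrite /n1 /n2 /d; field.
  - have e1 := lagrange1 (l1 y) (l2 x2) (l2 y) (l1 x2).
    have e2 := lagrange1 (l1 x1) (l2 y) (l2 x1) (l1 y).
    rewrite -/n1 in e1; rewrite -/n2 in e2.
    rewrite !expr_div_n -mulrDl /K mulrAC ler_pM2r ?invr_gt0 //.
    apply: (le_trans (lerD e1 e2)).
    rewrite -subr_ge0.
    have -> : (l1 x1 ^+ 2 + l2 x1 ^+ 2 + l1 x2 ^+ 2 + l2 x2 ^+ 2) * (l1 y ^+ 2 + l2 y ^+ 2) -
      ((l1 y ^+ 2 + l2 y ^+ 2) * (l2 x2 ^+ 2 + l1 x2 ^+ 2) + (l1 x1 ^+ 2 + l2 x1 ^+ 2) * (l2 y ^+ 2 + l1 y ^+ 2)) = 0 by ring.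
    by [].
have nd' : forall x y, H x -> H y -> l1 x * l2 y = l2 x * l1 y.
  move=> x y Hx Hy; apply/eqP; rewrite -subr_eq0; apply/negPn/negP => hne.
  by apply: nd; exists x, y.
have [[x1 [H1 hn]] | nz] := pselect (exists x1, H x1 /\ l1 x1 ^+ 2 + l2 x1 ^+ 2 != 0).
  set n := l1 x1 ^+ 2 + l2 x1 ^+ 2.
  have n0 : 0 < n.
    rewrite lt_def hn /=; have := sqr_ge0 (l1 x1); have := sqr_ge0 (l2 x1); rewrite /n; lra.
  exists x1, x1, (1 / n); split => //.
    by rewrite divr_ge0 // ltW.
  move=> y Hy; have hxy := nd' x1 y H1 Hy.
  exists ((l1 y * l1 x1 + l2 y * l2 x1) / n), 0; split.
  - rewrite mul0r addr0 mulrAC.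
    have -> : (l1 y * l1 x1 + l2 y * l2 x1) * l1 x1 = l1 y * n.
      transitivity (l1 y * l1 x1 ^+ 2 + l2 x1 * (l1 x1 * l2 y)); first by ring.
      by rewrite hxy /n; ring.
    by rewrite mulfK // gt_eqF.
  - rewrite mul0r addr0 mulrAC.
    have -> : (l1 y * l1 x1 + l2 y * l2 x1) * l2 x1 = l2 y * n.
      transitivity (l2 y * l2 x1 ^+ 2 + l1 x1 * (l2 x1 * l1 y)); first by ring.
      by rewrite -hxy /n; ring.
    by rewrite mulfK // gt_eqF.
  - rewrite expr0n /= addr0 expr_div_n.
    have e := lagrange2 (l1 y) (l1 x1) (l2 y) (l2 x1).
    rewrite -/n in e.
    rewrite ler_pdivrMr ?exprn_gt0 //.
    have -> : 1 / n * (l1 y ^+ 2 + l2 y ^+ 2) * n ^+ 2 = (l1 y ^+ 2 + l2 y ^+ 2) * n.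
      by field; rewrite gt_eqF.
    exact: e.
have z : forall x, H x -> l1 x = 0 /\ l2 x = 0.
  move=> x Hx; have : l1 x ^+ 2 + l2 x ^+ 2 = 0.
    apply/eqP; apply/negPn/negP => hne; apply: nz; by exists x.
  move=> h; have := sqr_ge0 (l1 x); have := sqr_ge0 (l2 x) => h2 h1.
  have h1' : l1 x ^+ 2 = 0 by lra.
  have h2' : l2 x ^+ 2 = 0 by lra.
  by split; apply/eqP; rewrite -sqrf_eq0; apply/eqP.
exists x0, x0, 0; split => //.
move=> y Hy; have [z1 z2] := z y Hy; have [z3 z4] := z x0 Hx0.
exists 0, 0; split.
- by rewrite z1 z3; ring.
- by rewrite z2 z4; ring.
- by rewrite expr0n /= addr0 mul0r.
Qed.

Lemma ptwise (R : realType) (c1 c2 l d v gv u gu : R) :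
  0 <= c1 -> 0 <= c2 -> 0 < l -> 0 < d -> d <= 1 -> d * (2 * l + 2 * c2) <= l / 8 ->
  c1 * (gv + gu) ^+ 2 - c2 * (v + u) ^+ 2 - 3 * l / 4 * ((v + u) ^+ 2 + (gv + gu) ^+ 2)
  >= (1 - d) * (c1 * gv ^+ 2 - c2 * v ^+ 2 - l * (v ^+ 2 + gv ^+ 2))
     + l / 8 * ((v + u) ^+ 2 + (gv + gu) ^+ 2)
     - (c1 + 2 * c2 + 2 * l) / d * (u ^+ 2 + gu ^+ 2).
Proof.
move=> hc1 hc2 hl hd hd1 hdd.
have F1 : 2 * gv * gu >= - (d * gv ^+ 2) - gu ^+ 2 / d.
  have h := sqr_ge0 (d * gv + gu).
  rewrite -subr_ge0.
  have -> : 2 * gv * gu - (- (d * gv ^+ 2) - gu ^+ 2 / d) = (d * gv + gu) ^+ 2 / d.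
    by field; rewrite gt_eqF.
  by rewrite divr_ge0 // ltW.
have F2 : 2 * v * u <= d * v ^+ 2 + u ^+ 2 / d.
  rewrite -subr_ge0.
  have -> : d * v ^+ 2 + u ^+ 2 / d - 2 * v * u = (d * v - u) ^+ 2 / d.
    by field; rewrite gt_eqF.
  by rewrite divr_ge0 ?sqr_ge0 // ltW.
have F3 : 2 * gv * gu <= d * gv ^+ 2 + gu ^+ 2 / d.
  rewrite -subr_ge0.
  have -> : d * gv ^+ 2 + gu ^+ 2 / d - 2 * gv * gu = (d * gv - gu) ^+ 2 / d.
    by field; rewrite gt_eqF.
  by rewrite divr_ge0 ?sqr_ge0 // ltW.
have id1 : 1 <= 1 / d by rewrite ler_pdivlMr // mul1r.
set V := v ^+ 2; set G := gv ^+ 2; set U := u ^+ 2; set W := gu ^+ 2.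
set X := 2 * gv * gu; set Y := 2 * v * u.
have eg : (gv + gu) ^+ 2 = G + X + W by rewrite /G /X /W; ring.
have ee : (v + u) ^+ 2 = V + Y + U by rewrite /V /Y /U; ring.
rewrite eg ee.
have hV : 0 <= V := sqr_ge0 _. have hG : 0 <= G := sqr_ge0 _.
have hU : 0 <= U := sqr_ge0 _. have hW : 0 <= W := sqr_ge0 _.
set iD := 1 / d.
have eW : W / d = iD * W by rewrite /iD mulrC mul1r.
have eU : U / d = iD * U by rewrite /iD mulrC mul1r.
rewrite eW in F1 F3; rewrite eU in F2.
rewrite -/V -/G -/X -/Y in F1 F2 F3.
have eB : (c1 + 2 * c2 + 2 * l) / d = (c1 + 2 * c2 + 2 * l) * iD by rewrite /iD mul1r.
rewrite eB.
have P1 := ler_wpM2l hc1 F1.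
have P2 := ler_wpM2l hc2 F2.
have P3 := ler_wpM2l (ltW hl) F2.
have P4 := ler_wpM2l (ltW hl) F3.
have iD1 : 1 <= iD by [].
have s0 : 0 <= l / 8 - d * (2 * l + 2 * c2) by lra.
have Q1 : 0 <= (l / 8 - d * (2 * l + 2 * c2)) * V by apply: mulr_ge0.
have Q3 : 0 <= (l / 8 - d * (2 * l + 2 * c2)) * G by apply: mulr_ge0.
have Q2 : 0 <= d * l * V by apply: mulr_ge0 => //; apply: mulr_ge0; lra.
have Q2' : 0 <= d * l * G by apply: mulr_ge0 => //; apply: mulr_ge0; lra.
have Q2'' : 0 <= d * c2 * G by apply: mulr_ge0 => //; apply: mulr_ge0; lra.
have Q4 : 0 <= (iD - 1) * (c2 + l) * U by apply: mulr_ge0 => //; apply: mulr_ge0; lra.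
have Q4' : 0 <= iD * c1 * U by apply: mulr_ge0 => //; apply: mulr_ge0; lra.
have Q4'' : 0 <= c2 * U by apply: mulr_ge0.
have Q4''' : 0 <= l * U by apply: mulr_ge0 => //; lra.
have Q5 : 0 <= (iD - 1) * l * W by apply: mulr_ge0 => //; apply: mulr_ge0; lra.
have Q5' : 0 <= iD * c2 * W by apply: mulr_ge0 => //; apply: mulr_ge0; lra.
have Q5'' : 0 <= c1 * W by apply: mulr_ge0.
have Q5''' : 0 <= l * W by apply: mulr_ge0 => //; lra.
have Q6 : 0 <= iD * l * U by apply: mulr_ge0 => //; apply: mulr_ge0; lra.
clearbody V G U W X Y iD.
lra.
Qed.

Lemma sqle (R : realType) (x y : R) : `|x| <= y -> x ^+ 2 <= y ^+ 2.
Proof.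
move=> hxy; rewrite -real_normK ?num_real //.
have := normr_ge0 x; nra.
Qed.

Lemma th_facts (R : realType) (l Z : R) : 0 < l -> 0 <= Z ->
  0 < l / (8 * (Z + 1) + l) /\ Z * (l / (8 * (Z + 1) + l)) ^+ 2 <= l / 8.
Proof.
move=> hl hZ; set th := l / (8 * (Z + 1) + l).
have den0 : 0 < 8 * (Z + 1) + l by lra.
have th0 : 0 < th by rewrite /th divr_gt0.
have th1 : th <= 1 by rewrite /th ler_pdivrMr // mul1r; lra.
split => //.
have e : th * (8 * (Z + 1) + l) = l by rewrite /th mulfVK // gt_eqF.
have h1' : 8 * (Z * th) <= l.
  rewrite -[X in _ <= X]e; have := ltW th0; nra.
have : Z * th ^+ 2 <= Z * th.
  by rewrite expr2 mulrA ler_piMr // mulr_ge0 // ltW.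
lra.
Qed.

Lemma dl_facts (R : realType) (l c2 : R) : 0 < l -> 0 <= c2 ->
  [/\ 0 < l / (32 * (l + c2)), l / (32 * (l + c2)) <= 1 &
      l / (32 * (l + c2)) * (2 * l + 2 * c2) <= l / 8].
Proof.
move=> hl hc; split.
- apply: divr_gt0 => //; lra.
- rewrite ler_pdivrMr ?mul1r; lra.
- rewrite (_ : l / (32 * (l + c2)) * (2 * l + 2 * c2) = l / 16); last first.
    by field; apply/negP => /eqP h; lra.
  lra.
Qed.

Lemma sumsq_le (R : realType) (L1 L2 n1 n2 t : R) :
  L1 ^+ 2 <= n1 ^+ 2 * t -> L2 ^+ 2 <= n2 ^+ 2 * t ->
  L1 ^+ 2 + L2 ^+ 2 <= (n1 ^+ 2 + n2 ^+ 2) * t.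
Proof. move=> h1 h2; rewrite mulrDl; lra. Qed.

Lemma final_arith (R : realType) (c1 c2 l dl B P D Pv Dv Pu Du Ne : R) :
  dl <= 1 ->
  0 <= - (c2 + 3 * l / 4 + l / 8) * P + (c1 - 3 * l / 4 - l / 8) * D
       + (1 - dl) * (c2 + l) * Pv + - ((1 - dl) * (c1 - l)) * Dv + B * Pu + B * Du ->
  Ne = P + D ->
  l * (Pv + Dv) <= c1 * Dv - c2 * Pv ->
  B * (Pu + Du) <= l / 8 * Ne ->
  3 * l / 4 * Ne <= c1 * D - c2 * P.
Proof.
move=> hdl hm hNe hc hNu.
have hX : 0 <= (1 - dl) * (c1 * Dv - c2 * Pv - l * (Pv + Dv)).
  by apply: mulr_ge0; lra.
rewrite hNe in hNu *.
lra.
Qed.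

Lemma nu_arith (R : realType) (B Nu a2c2 M K L S th Ne Z l : R) :
  0 <= B -> 0 <= M -> 0 <= K -> 0 <= Ne ->
  Nu <= 2 * a2c2 * M -> a2c2 <= K * L -> L <= S * th ^+ 2 * Ne ->
  Z = 2 * B * K * S * M -> Z * th ^+ 2 <= l / 8 ->
  B * Nu <= l / 8 * Ne.
Proof.
move=> hB hM hK hNe h1 h2 h3 hZ h4.
apply: (le_trans (ler_wpM2l hB h1)).
have h5 : 2 * a2c2 * M <= 2 * (K * (S * th ^+ 2 * Ne)) * M.
  apply: ler_wpM2r => //; apply: ler_wpM2l => //.
  apply: (le_trans h2); exact: ler_wpM2l.
apply: (le_trans (ler_wpM2l hB h5)).
have -> : B * (2 * (K * (S * th ^+ 2 * Ne)) * M) = (Z * th ^+ 2) * Ne.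
  by rewrite hZ; ring.
exact: ler_wpM2r.
Qed.

Lemma c_facts (R : realType) (b k : R) : b < -1 -> 0 < k ->
  0 <= 2 * k / b ^+ 2 /\ 0 <= 2 * k * (b + 1) / b.
Proof.
move=> hb hk; split; first by rewrite divr_ge0 ?sqr_ge0 // mulr_ge0 // ltW.
rewrite -mulrA; apply: mulr_ge0; first by rewrite mulr_ge0 // ltW.
rewrite (_ : (b + 1) / b = (- (b + 1)) / (- b)); last by rewrite invrN mulrNN.
by apply: divr_ge0; lra.
Qed.

Lemma B_ge0 (R : realType) (c1 c2 l dl : R) : 0 <= c1 -> 0 <= c2 -> 0 < l -> 0 < dl ->
  0 <= (c1 + 2 * c2 + 2 * l) / dl.
Proof. move=> h1 h2 h3 h4; rewrite divr_ge0 ?ltW //; lra. Qed.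

Lemma pw_nu (R : realType) (a c w1 w2 h1 h2 al : R) : 0 <= al ->
  0 <= -1 * ((a * w1 + c * w2) ^+ 2 * al) + -1 * ((a * h1 + c * h2) ^+ 2 * al)
       + 2 * a ^+ 2 * (w1 ^+ 2 * al) + 2 * a ^+ 2 * (h1 ^+ 2 * al)
       + 2 * c ^+ 2 * (w2 ^+ 2 * al) + 2 * c ^+ 2 * (h2 ^+ 2 * al).
Proof.
move=> hal.
have s1 := sq_comb a c w1 w2; have s2 := sq_comb a c h1 h2.
rewrite -subr_ge0 in s1; rewrite -subr_ge0 in s2.
have := addr_ge0 (mulr_ge0 s1 hal) (mulr_ge0 s2 hal).
congr (_ <= _); ring.
Qed.

Lemma nu_int_arith (R : realType) (I1 I2 I3 I4 I5 I6 a c : R) :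
  0 <= I3 -> 0 <= I4 -> 0 <= I5 -> 0 <= I6 ->
  0 <= -1 * I1 + -1 * I2 + 2 * a ^+ 2 * I3 + 2 * a ^+ 2 * I4 + 2 * c ^+ 2 * I5 + 2 * c ^+ 2 * I6 ->
  I1 + I2 <= 2 * (a ^+ 2 + c ^+ 2) * (I3 + I4 + (I5 + I6)).
Proof.
move=> h3 h4 h5 h6 h.
have ha := sqr_ge0 a; have hc := sqr_ge0 c.
have p1 : 0 <= a ^+ 2 * (I5 + I6) by apply: mulr_ge0 => //; lra.
have p2 : 0 <= c ^+ 2 * (I3 + I4) by apply: mulr_ge0 => //; lra.
rewrite -subr_ge0.
have -> : 2 * (a ^+ 2 + c ^+ 2) * (I3 + I4 + (I5 + I6)) - (I1 + I2)
  = (-1 * I1 + -1 * I2 + 2 * a ^+ 2 * I3 + 2 * a ^+ 2 * I4 + 2 * c ^+ 2 * I5 + 2 * c ^+ 2 * I6)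
    + 2 * (a ^+ 2 * (I5 + I6)) + 2 * (c ^+ 2 * (I3 + I4)) by ring.
lra.
Qed.

Lemma pw_main (R : realType) (c1 c2 l dl v gv u gu al : R) :
  0 <= c1 -> 0 <= c2 -> 0 < l -> 0 < dl -> dl <= 1 -> dl * (2 * l + 2 * c2) <= l / 8 ->
  0 <= al ->
  0 <= - (c2 + 3 * l / 4 + l / 8) * ((v + u) ^+ 2 * al) + (c1 - 3 * l / 4 - l / 8) * ((gv + gu) ^+ 2 * al)
       + (1 - dl) * (c2 + l) * (v ^+ 2 * al) + - ((1 - dl) * (c1 - l)) * (gv ^+ 2 * al)
       + (c1 + 2 * c2 + 2 * l) / dl * (u ^+ 2 * al) + (c1 + 2 * c2 + 2 * l) / dl * (gu ^+ 2 * al).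
Proof.
move=> h1 h2 h3 h4 h5 h6 hal.
have P := ptwise v gv u gu h1 h2 h3 h4 h5 h6.
rewrite -subr_ge0 in P.
have := mulr_ge0 P hal.
congr (_ <= _); ring.
Qed.

Unset Implicit Arguments.
Theorem lemma2p6 (R : realType) (b A xs lambda1 : R)
  (hb : b < -1) (hA : 0 < A) (hl : 0 < lambda1)
  (hcoer : forall eta g : R -> R, H1alpha b A xs eta g ->
     ip eta (dQ b A xs) = 0 -> ip eta (SQ b A xs) = 0 ->
     Lform b A xs eta g >= lambda1 * H1a_sqnorm b A xs eta g) :
  exists theta : R, 0 < theta /\
    forall eta g : R -> R, H1alpha b A xs eta g ->
      `| ip eta (fun x => SQ b A xs x / L2norm (SQ b A xs)) |
      + `| ip eta (fun x => dQ b A xs x / L2norm (dQ b A xs)) |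
        <= theta * H1a_norm b A xs eta g ->
      Lform b A xs eta g >= 3 * lambda1 / 4 * H1a_sqnorm b A xs eta g.
Proof.
set l := lambda1 in hl hcoer *.
have [[e0 [g0 H0]] | hne] := pselect (exists e g, H1alpha b A xs e g); last first.
  exists 1; split => // eta g Hg; exfalso; apply: hne; by exists eta, g.
set Hp := fun p : (R -> R) * (R -> R) => H1alpha b A xs p.1 p.2.
set l1 := fun p : (R -> R) * (R -> R) => ip p.1 (SQ b A xs).
set l2 := fun p : (R -> R) * (R -> R) => ip p.1 (dQ b A xs).
have [[w1 h1] [[w2 h2] [K [Hw1 Hw2 K0 hK]]]] := @lin_choice R _ Hp l1 l2 (e0, g0) H0.
rewrite /Hp /= in Hw1 Hw2.
set c1 := 2 * kk b A / b ^+ 2.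
set c2 := 2 * kk b A * (b + 1) / b.
have kk0 : 0 < kk b A by apply: powR_gt0; exact: K0_gt0.
have [c10 c20] := c_facts hb kk0.
set n1 := L2norm (SQ b A xs); set n2 := L2norm (dQ b A xs).
set N1 := H1a_sqnorm b A xs w1 h1; set N2 := H1a_sqnorm b A xs w2 h2.
have N10 : 0 <= N1.
  by apply: Rintegral_ge0 => x _; rewrite mulr_ge0 ?alpha_ge0 // addr_ge0 // sqr_ge0.
have N20 : 0 <= N2.
  by apply: Rintegral_ge0 => x _; rewrite mulr_ge0 ?alpha_ge0 // addr_ge0 // sqr_ge0.
have [dl0 dl1 dll] := dl_facts hl c20.
set dl := l / (32 * (l + c2)) in dl0 dl1 dll.
set B := (c1 + 2 * c2 + 2 * l) / dl.
have B0 : 0 <= B := B_ge0 c10 c20 hl dl0.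
set S := n1 ^+ 2 + n2 ^+ 2.
set M := N1 + N2.
have M0 : 0 <= M by rewrite /M addr_ge0.
set Z := 2 * B * K * S * M.
have Z0 : 0 <= Z.
  rewrite /Z; apply: mulr_ge0; last exact: M0.
  apply: mulr_ge0; last by rewrite /S addr_ge0 // sqr_ge0.
  by apply: mulr_ge0 => //; apply: mulr_ge0.
have [th0 thZ] := th_facts hl Z0.
set th := l / (8 * (Z + 1) + l) in th0 thZ.
exists th; split => // eta g Hg hth.
have mSQ := meas_SQ b A xs; have mdQ := meas_dQ b A xs.
have iSQ := int_SQ2 xs hb hA; have idQ := int_dQ2 xs hb hA.
have intP : forall e gg, H1alpha b A xs e gg ->
    Int (fun x => e x * SQ b A xs x) /\ Int (fun x => e x * dQ b A xs x).
  by move=> e gg [[me' _] ie' _ _ _]; split; exact: prod_int.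
have [[me mg] ie [ig iv] iwe iwg] := Hg.
set Ne := H1a_sqnorm b A xs eta g.
have Ne0 : 0 <= Ne.
  by apply: Rintegral_ge0 => x _; rewrite mulr_ge0 ?alpha_ge0 // addr_ge0 // sqr_ge0.
set rN := Num.sqrt Ne.
have rN2 : rN ^+ 2 = Ne := sqr_sqrtr Ne0.
have bnd : forall (f : R -> R), measurable_fun setT f -> Int (fun x => f x ^+ 2) ->
    `|ip eta (fun x => f x / L2norm f)| <= th * rN ->
    `|ip eta f| <= L2norm f * (th * rN).
  move=> f mf iF h.
  have [n0|n0] := eqVneq (L2norm f) 0.
    by rewrite (ip_zero me ie mf iF n0) normr0 n0 mul0r.
  have npos : 0 < L2norm f by rewrite lt_def n0 sqrtr_ge0.
  rewrite ip_div in h; last exact: prod_int.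
  rewrite normrM normfV (gtr0_norm npos) ler_pdivrMr // in h.
  by rewrite mulrC.
have hth1 : `|ip eta (fun x => SQ b A xs x / n1)| <= th * rN.
  apply: le_trans hth; rewrite lerDl; exact: normr_ge0.
have hth2 : `|ip eta (fun x => dQ b A xs x / n2)| <= th * rN.
  apply: le_trans hth; rewrite lerDr; exact: normr_ge0.
set L1 := ip eta (SQ b A xs); set L2 := ip eta (dQ b A xs).
have hL1 : `|L1| <= n1 * (th * rN) by exact: bnd.
have hL2 : `|L2| <= n2 * (th * rN) by exact: bnd.
have hLsq : L1 ^+ 2 + L2 ^+ 2 <= S * th ^+ 2 * Ne.
  rewrite -mulrA; apply: sumsq_le.
    by have := sqle hL1; rewrite !exprMn rN2.
  by have := sqle hL2; rewrite !exprMn rN2.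
have [a [c [ea1 ea2 eac]]] := hK (eta, g) Hg.
rewrite /l1 /l2 /= -/L1 -/L2 in ea1 ea2 eac.
set u := fun x => a * w1 x + c * w2 x.
set gu := fun x => a * h1 x + c * h2 x.
have Hu : H1alpha b A xs u gu := H1_lin a c Hw1 Hw2.
set v := fun x => 1 * eta x + (-1) * u x.
set gv := fun x => 1 * g x + (-1) * gu x.
have Hv : H1alpha b A xs v gv := H1_lin 1 (-1) Hg Hu.
have [iw1S iw1d] := intP _ _ Hw1.
have [iw2S iw2d] := intP _ _ Hw2.
have [ieS ied] := intP _ _ Hg.
have [iuS iud] := intP _ _ Hu.
have hv1 : ip v (SQ b A xs) = 0.
  rewrite /v ip_lin // /u ip_lin // -/L1 ea1; ring.
have hv2 : ip v (dQ b A xs) = 0.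
  rewrite /v ip_lin // /u ip_lin // -/L2 ea2; ring.
have hc := hcoer v gv Hv hv2 hv1.
have [[mu_ mgu] _ _ iEu iGu] := Hu.
have [[mv_ mgv] _ _ iEv iGv] := Hv.
have [[mw1 mh1] _ _ iE1 iG1] := Hw1.
have [[mw2 mh2] _ _ iE2 iG2] := Hw2.
have hNu : H1a_sqnorm b A xs u gu <= 2 * (a ^+ 2 + c ^+ 2) * M.
  rewrite (sqnormE Hu) /M /N1 /N2 (sqnormE Hw1) (sqnormE Hw2).
  apply: nu_int_arith.
  - by apply: Rintegral_ge0 => x _; rewrite mulr_ge0 ?alpha_ge0 ?sqr_ge0.
  - by apply: Rintegral_ge0 => x _; rewrite mulr_ge0 ?alpha_ge0 ?sqr_ge0.
  - by apply: Rintegral_ge0 => x _; rewrite mulr_ge0 ?alpha_ge0 ?sqr_ge0.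
  - by apply: Rintegral_ge0 => x _; rewrite mulr_ge0 ?alpha_ge0 ?sqr_ge0.
  apply: int_comb6_ge0 => // x.
  exact: pw_nu (alpha_ge0 b A xs x).
have hNu' : (c1 + 2 * c2 + 2 * l) / dl * H1a_sqnorm b A xs u gu <= l / 8 * Ne.
  apply: (nu_arith B0 M0 K0 Ne0 hNu eac hLsq _ thZ).
  by [].
have hmain : 0 <= - (c2 + 3 * l / 4 + l / 8) * \int[mu]_x (eta x ^+ 2 * alpha b A xs x)
    + (c1 - 3 * l / 4 - l / 8) * \int[mu]_x (g x ^+ 2 * alpha b A xs x)
    + (1 - dl) * (c2 + l) * \int[mu]_x (v x ^+ 2 * alpha b A xs x)
    + - ((1 - dl) * (c1 - l)) * \int[mu]_x (gv x ^+ 2 * alpha b A xs x)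
    + B * \int[mu]_x (u x ^+ 2 * alpha b A xs x)
    + B * \int[mu]_x (gu x ^+ 2 * alpha b A xs x).
  apply: int_comb6_ge0 => // x.
  have ex : eta x = v x + u x by rewrite /v; ring.
  have eg : g x = gv x + gu x by rewrite /gv; ring.
  rewrite ex eg.
  exact: pw_main c10 c20 hl dl0 dl1 dll (alpha_ge0 b A xs x).
rewrite (sqnormE Hv) in hc.
rewrite (sqnormE Hu) in hNu'.
have hNe : Ne = \int[mu]_x (eta x ^+ 2 * alpha b A xs x) + \int[mu]_x (g x ^+ 2 * alpha b A xs x).
  exact: sqnormE.
exact: (final_arith dl1 hmain hNe hc hNu').
Qed.
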